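(* In the setting below, the sequence $n\mapsto f(\hat x_n)$ is stationary, i.e. constant from some index on.
   Context: Let $x_1,\dots,x_N\in\mathbb{R}^q$ and let $d:\mathbb{R}^q\times\mathbb{R}^q\to\mathbb{R}_{\ge0}$ be a function such that for every $J\subseteq\{1,\dots,N\}$, $x\mapsto\sum_{i\in J}d(x,x_i)$ attains its minimum. Let $\mu$ be a choice function with $\mu(J)\in\operatorname{argmin}_x\sum_{i\in J}d(x,x_i)$ for each $J$. Let $\hat x_0\in\mathbb{R}^q$ and define $C_n=\{i: d(\hat x_n,x_i)<1\}$, $\hat x_{n+1}=\mu(C_n)$. Let $f(x)=\sum_{i=1}^N\max(1-d(x,x_i),0)$. *)

(* Defs.v *)
From Stdlib Require Import Reals Lra Lia.
From Stdlib Require Fin.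
Open Scope R_scope.

Definition Rq (q : nat) : Type := Fin.t q -> R.

(* Data points are indexed by 0..N-1 (paper: 1..N).  A subset J of the
   index set is a boolean predicate on indices; only its values on
   0..N-1 matter. *)

Fixpoint sumJ (N : nat) (J : nat -> bool) (g : nat -> R) : R :=
  match N with
  | O => 0
  | S n => sumJ n J g + (if J n then g n else 0)
  end.

Fixpoint sumN (N : nat) (g : nat -> R) : R :=
  match N with
  | O => 0
  | S n => sumN n g + g n
  end.

Definition is_argmin {q : nat} (N : nat) (d : Rq q -> Rq q -> R)
  (xs : nat -> Rq q) (J : nat -> bool) (y : Rq q) : Prop :=
  forall x : Rq q, sumJ N J (fun i => d y (xs i)) <= sumJ N J (fun i => d x (xs i)).

Definition Cset {q : nat} (d : Rq q -> Rq q -> R) (xs : nat -> Rq q) (x : Rq q)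
  : nat -> bool :=
  fun i => if Rlt_dec (d x (xs i)) 1 then true else false.

Fixpoint xhat {q : nat} (d : Rq q -> Rq q -> R) (xs : nat -> Rq q)
  (mu : (nat -> bool) -> Rq q) (x0 : Rq q) (n : nat) : Rq q :=
  match n with
  | O => x0
  | S m => mu (Cset d xs (xhat d xs mu x0 m))
  end.

Definition fobj {q : nat} (N : nat) (d : Rq q -> Rq q -> R) (xs : nat -> Rq q)
  (x : Rq q) : R :=
  sumN N (fun i => Rmax (1 - d x (xs i)) 0).

(* Main.v *)
Require Import Defs.
From Stdlib Require Import Reals.
From Stdlib Require Import Lra Lia List Classical.
Import ListNotations.
Open Scope R_scope.

Lemma mono_le (g : nat -> R) : (forall n, g n <= g (S n)) ->
  forall m n, (m <= n)%nat -> g m <= g n.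
Proof.
  intros H m n Hmn. induction Hmn. lra. specialize (H m0). lra.
Qed.

Lemma ev_const (L : list R) : forall g : nat -> R, (forall n, g n <= g (S n)) ->
  (forall n, In (g n) L) -> exists n0, forall n, (n0 <= n)%nat -> g n = g n0.
Proof.
  induction L as [|a L IH]; intros g Hg Hin.
  - destruct (Hin O).
  - pose proof (mono_le g Hg) as Hm.
    destruct (classic (exists n, a < g n)) as [[n1 Hn1]|Hno].
    + destruct (IH (fun k => g (n1 + k)%nat)) as [n0 Hn0].
      * intro n. replace (n1 + S n)%nat with (S (n1 + n)) by lia. apply Hg.
      * intro k. destruct (Hin (n1 + k)%nat) as [E|E]; auto.
        pose proof (Hm n1 (n1+k)%nat ltac:(lia)). lra.
      * exists (n1 + n0)%nat. intros n Hn.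
        replace n with (n1 + (n - n1))%nat by lia. apply Hn0. lia.
    + destruct (classic (exists n, g n = a)) as [[n1 Hn1]|Hno2].
      * exists n1. intros n Hn. pose proof (Hm n1 n Hn).
        assert (~ a < g n) by (intro; apply Hno; eauto). lra.
      * apply IH; auto. intro n. destruct (Hin n) as [E|E]; auto.
        exfalso; apply Hno2; eauto.
Qed.

Lemma sumJ_sub N J c (g : nat -> R) :
  sumJ N J (fun i => c - g i) = sumJ N J (fun _ => c) - sumJ N J g.
Proof. induction N; simpl. lra. destruct (J N); lra. Qed.

Lemma sumJ_ext N J J' (g g' : nat -> R) :
  (forall i, (i < N)%nat -> J i = J' i) -> (forall i, (i < N)%nat -> g i = g' i) ->
  sumJ N J g = sumJ N J' g'.
Proof.
  induction N; intros HJ Hg; simpl. reflexivity.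
  rewrite IHN by (intros; auto with arith). rewrite HJ, Hg by lia. reflexivity.
Qed.

Lemma le_fobj {q} N d (xs : nat -> Rq q) J x :
  sumJ N J (fun i => 1 - d x (xs i)) <= fobj N d xs x.
Proof.
  unfold fobj. induction N; simpl. lra.
  pose proof (Rmax_l (1 - d x (xs N)) 0). pose proof (Rmax_r (1 - d x (xs N)) 0).
  destruct (J N); lra.
Qed.

Lemma fobj_eq {q} N d (xs : nat -> Rq q) x :
  fobj N d xs x = sumJ N (Cset d xs x) (fun i => 1 - d x (xs i)).
Proof.
  unfold fobj. induction N; simpl. lra. rewrite IHN. unfold Cset.
  destruct (Rlt_dec (d x (xs N)) 1).
  - rewrite Rmax_left by lra. reflexivity.
  - rewrite Rmax_right by lra. lra.
Qed.

Fixpoint allb (n : nat) : list (list bool) :=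
  match n with
  | O => [[]]
  | S m => flat_map (fun bs => [bs ++ [false]; bs ++ [true]]) (allb m)
  end.

Lemma in_allb N (J : nat -> bool) : In (map J (seq 0 N)) (allb N).
Proof.
  induction N. simpl. auto.
  cbn [allb]. apply in_flat_map. exists (map J (seq 0 N)). split; auto.
  rewrite seq_S, map_app. simpl. destruct (J N); simpl; auto.
Qed.

Lemma nth_map_seq N (J : nat -> bool) i : (i < N)%nat ->
  nth i (map J (seq 0 N)) false = J i.
Proof.
  intro H. rewrite nth_indep with (d' := J 0%nat).
  - rewrite map_nth, seq_nth by lia. reflexivity.
  - rewrite length_map, length_seq. lia.
Qed.

Theorem proposition2 (q N : nat) (xs : nat -> Rq q)
  (d : Rq q -> Rq q -> R)
  (d_nonneg : forall x y, 0 <= d x y)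
  (min_attained : forall J : nat -> bool, exists y, is_argmin N d xs J y)
  (mu : (nat -> bool) -> Rq q)
  (mu_argmin : forall J : nat -> bool, is_argmin N d xs J (mu J))
  (x0 : Rq q) :
  exists n0 : nat, forall n : nat, (n0 <= n)%nat ->
    fobj N d xs (xhat d xs mu x0 n) = fobj N d xs (xhat d xs mu x0 n0).
Proof.
  set (h := fun J : nat -> bool => sumJ N J (fun i => 1 - d (mu J) (xs i))).
  assert (Hmin : forall J x, sumJ N J (fun i => 1 - d x (xs i)) <= h J).
  { intros J x. unfold h. rewrite !sumJ_sub. pose proof (mu_argmin J x) as HH. cbv beta in HH. lra. }
  assert (Hagree : forall J J', (forall i, (i < N)%nat -> J i = J' i) -> h J = h J').
  { intros J J' HJ.
    assert (E : forall K, sumJ N J (fun i => 1 - d K (xs i)) = sumJ N J' (fun i => 1 - d K (xs i)))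
      by (intro K; apply sumJ_ext; auto).
    pose proof (Hmin J (mu J')) as A. pose proof (Hmin J' (mu J)) as B.
    unfold h in A, B |- *. rewrite E in A. rewrite <- E in B. lra. }
  set (C := fun n => Cset d xs (xhat d xs mu x0 n)).
  set (g := fun n => h (C n)).
  assert (H1 : forall n, fobj N d xs (xhat d xs mu x0 n) <= g n).
  { intro n. rewrite fobj_eq. apply Hmin. }
  assert (H2 : forall n, g n <= fobj N d xs (xhat d xs mu x0 (S n))).
  { intro n. unfold g, h. simpl. apply le_fobj. }
  assert (Hg : forall n, g n <= g (S n)).
  { intro n. pose proof (H1 (S n)). pose proof (H2 n). lra. }
  destruct (ev_const (map (fun bs => h (fun i => nth i bs false)) (allb N)) g Hg)
    as [n0 Hn0].
  { intro n. apply in_map_iff. exists (map (C n) (seq 0 N)). split.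
    - unfold g. apply Hagree. intros i Hi. apply nth_map_seq. exact Hi.
    - apply in_allb. }
  exists (S n0). intros n Hn.
  assert (forall m, (n0 < m)%nat -> fobj N d xs (xhat d xs mu x0 m) = g n0).
  { intros m Hm. destruct m as [|m]. lia.
    pose proof (H2 m). pose proof (H1 (S m)).
    rewrite (Hn0 m) in * by lia. rewrite (Hn0 (S m)) in * by lia. lra. }
  rewrite !H by lia. reflexivity.
Qed.
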